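(* Let $m\ge3$ and let $\lambda_1$ be a $\mathbb{Z}_2$-characteristic map over $P_m$ whose $\mathbf b\mathbf c$-pieces are $s_1,\dots,s_k$ (so that, cyclically, $\lambda_1=\mathbf a s_1\mathbf a s_2\mathbf a\cdots\mathbf a s_k$ with $k=|\lambda_1^{-1}(\mathbf a)|$). Let $p\neq q$ be vertices with $\lambda_1(p)=\lambda_1(q)=\mathbf a$. For each $i$ let $\phi_i,\psi_i$ each be either the identity or the inversion, and let $\lambda_2=\mathbf a\phi_1(s_1)\mathbf a\cdots\mathbf a\phi_k(s_k)$, $\lambda_3=\mathbf a\psi_1(s_1)\mathbf a\cdots\mathbf a\psi_k(s_k)$, and $\lambda_4=\mathbf a\psi_1(\phi_1(s_1))\mathbf a\cdots\mathbf a\psi_k(\phi_k(s_k))$. Then there exists a $\mathbb{Z}_2$-characteristic map $\Lambda$ over $\mathrm{wed}_{p,q}P_m$ with $\operatorname{proj}_{\{p_2,q_2\}}\Lambda\simeq\lambda_1$, $\operatorname{proj}_{\{p_1,q_2\}}\Lambda\simeq\lambda_2$, $\operatorname{proj}_{\{p_2,q_1\}}\Lambda\simeq\lambda_3$, $\operatorname{proj}_{\{p_1,q_1\}}\Lambda\simeq\lambda_4$; i.e. the edges $\{\lambda_1,\lambda_2,p\}$ and $\{\lambda_1,\lambda_3,q\}$ span a realizable square with fourth node $\lambda_4$. (Every D-J class $p$-adjacent (resp. $q$-adjacent) to $\lambda_1$ has a representative of the form of $\lambda_2$ (resp. $\lambda_3$), so any two such edges span a realizable square.)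
   Context: $P_m$: simplicial complex on $[m]$ with facets $\{i,i+1\}$ mod $m$. $\mathbf a=(1,0)^T,\mathbf b=(0,1)^T,\mathbf c=(1,1)^T$; a $\mathbb{Z}_2$-characteristic map over $P_m$ is a cyclic word $\lambda\colon[m]\to\{\mathbf a,\mathbf b,\mathbf c\}$ with cyclically consecutive letters distinct; D-J equivalence ($\simeq$) is composition with $GL(2,\mathbb{Z}_2)$ (permutations of letters). $\mathbf b\mathbf c$-pieces: restrictions of $\lambda$ to maximal cyclic intervals of $[m]\setminus\lambda^{-1}(\mathbf a)$; inversion swaps $\mathbf b,\mathbf c$ on a piece. For a simplicial complex $K$ and vertices $p\ne q$, $\mathrm{wed}_{p,q}K$ has vertex set $(V\setminus\{p,q\})\cup\{p_1,p_2,q_1,q_2\}$ and minimal non-faces obtained from those of $K$ by replacing $p$ by $p_1,p_2$ and $q$ by $q_1,q_2$ whenever they occur. A $\mathbb{Z}_2$-characteristic map over an $(n-1)$-dimensional complex is a map to $\mathbb{Z}_2^n$ sending vertices of each face to linearly independent vectors. For a face $\sigma$, $\operatorname{proj}_\sigma\Lambda(w)=[\Lambda(w)]\in\mathbb{Z}_2^n/\langle\Lambda(v):v\in\sigma\rangle$ on $\operatorname{lk}\sigma$. The link of $\{p_i,q_j\}$ in $\mathrm{wed}_{p,q}P_m$ is identified with $P_m$ via $p_{3-i}\mapsto p$, $q_{3-j}\mapsto q$, identity elsewhere. *)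

(* Defs.v *)
From HB Require Import structures.
From mathcomp Require Import all_boot all_order all_algebra.
Set Implicit Arguments. Unset Strict Implicit. Unset Printing Implicit Defensive.
Import GRing.Theory.
Local Open Scope ring_scope.

Inductive letter := La | Lb | Lc.

Definition vecOf (l : letter) : 'rV['F_2]_2 :=
  match l with
  | La => \row_(j < 2) (j == 0 :> nat)%:R
  | Lb => \row_(j < 2) (j == 1 :> nat)%:R
  | Lc => \row_(j < 2) 1
  end.

(** Inversion of a bc-piece: swap b and c (a is fixed). *)
Definition inv_letter (l : letter) : letter :=
  match l with La => La | Lb => Lc | Lc => Lb end.

Definition Pm_char (m : nat) (lam : 'I_m -> letter) : Prop :=
  forall i : 'I_m, lam i <> lam (ordS i).

(** A choice of identity/inversion for each bc-piece of lam: a boolean function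
    (true = inversion) constant on each maximal cyclic interval avoiding a. *)
Definition piece_choice (m : nat) (lam : 'I_m -> letter) (phi : 'I_m -> bool) : Prop :=
  forall i : 'I_m, lam i <> La -> lam (ordS i) <> La -> phi i = phi (ordS i).

Definition apply_choice (m : nat) (lam : 'I_m -> letter) (phi : 'I_m -> bool)
  : 'I_m -> letter :=
  fun i => if phi i then inv_letter (lam i) else lam i.

Definition Pm_face (m : nat) (S : {set 'I_m}) : bool :=
  (#|S| <= 1)%N || [exists i : 'I_m, S == [set i; ordS i]].

Definition Pm_mnf (m : nat) (S : {set 'I_m}) : bool :=
  ~~ Pm_face S && [forall x in S, Pm_face (S :\ x)].

(** Vertex set of wed_{p,q} P_m: pairs (v,b); for v = p,q both b = false (index 1)
    and b = true (index 2) occur; other v only with b = false. *)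
Definition wV (m : nat) (p q : 'I_m) : predArgType :=
  {x : 'I_m * bool | (x.1 == p) || (x.1 == q) || ~~ x.2}.

Lemma wVp_proof (m : nat) (p q : 'I_m) (b : bool) :
  ((p, b).1 == p) || ((p, b).1 == q) || ~~ (p, b).2.
Proof. by rewrite /= eqxx. Qed.

Lemma wVq_proof (m : nat) (p q : 'I_m) (b : bool) :
  ((q, b).1 == p) || ((q, b).1 == q) || ~~ (q, b).2.
Proof. by rewrite /= eqxx orbT. Qed.

(** p_1 = vp false, p_2 = vp true; similarly for q. *)
Definition vp (m : nat) (p q : 'I_m) (b : bool) : wV p q := exist _ (p, b) (wVp_proof p q b).
Definition vq (m : nat) (p q : 'I_m) (b : bool) : wV p q := exist _ (q, b) (wVq_proof p q b).

(** The image in the wedge of a minimal non-face N of P_m: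
    p replaced by p_1,p_2 and q by q_1,q_2. *)
Definition wexpand (m : nat) (p q : 'I_m) (N : {set 'I_m}) : {set wV p q} :=
  [set w : wV p q | (sval w).1 \in N].

Definition wed_face (m : nat) (p q : 'I_m) (s : {set wV p q}) : bool :=
  ~~ [exists N : {set 'I_m}, Pm_mnf N && (wexpand p q N \subset s)].

(** Z_2-characteristic map over wed_{p,q} P_m (dimension 3, so into Z_2^4). *)
Definition wed_char (m : nat) (p q : 'I_m) (Lam : wV p q -> 'rV['F_2]_4) : Prop :=
  forall s : {set wV p q}, wed_face s -> free [seq Lam v | v in s].

Definition link_vertex (m : nat) (p q : 'I_m) (s : {set wV p q}) (w : wV p q) : bool :=
  (w \notin s) && wed_face (w |: s).

(** Identification of the link of {p_i,q_j} with P_m: p_{3-i} |-> p, q_{3-j} |-> q,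
    identity elsewhere, i.e. first projection. *)
Definition wident (m : nat) (p q : 'I_m) (w : wV p q) : 'I_m := (sval w).1.

(** proj_s Lam is D-J equivalent to lam: there is a linear map Z_2^4 -> Z_2^2 whose
    kernel is exactly <Lam(v) : v in s> (i.e. an isomorphism from the quotient
    Z_2^4 / <Lam(v) : v in s> onto Z_2^2) sending [Lam w] to lam(w) on the link. *)
Definition proj_DJ (m : nat) (p q : 'I_m) (Lam : wV p q -> 'rV['F_2]_4)
  (s : {set wV p q}) (lam : 'I_m -> letter) : Prop :=
  exists f : 'Hom('rV['F_2]_4, 'rV['F_2]_2),
    lker f = <<[seq Lam v | v in s]>>%VS /\
    forall w : wV p q, link_vertex s w -> f (Lam w) = vecOf (lam (wident w)).

(* Main.v *)
Require Import Defs.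
From HB Require Import structures.
From mathcomp Require Import all_boot all_order all_algebra.
Set Implicit Arguments. Unset Strict Implicit. Unset Printing Implicit Defensive.
Import GRing.Theory.
Local Open Scope ring_scope.
Notation F := 'F_2.
Definition bF (b : bool) : F := b%:R.
Lemma F2_cases (x : F) : x = 0 \/ x = 1.
Proof. case: x => [[|[|n]] H]; [left|right|]; try (apply: val_inj => //). by []. Qed.
Lemma bF1 : bF true = 1. Proof. by rewrite /bF. Qed.
Lemma bF0 : bF false = 0. Proof. by rewrite /bF. Qed.
Lemma bF_add a b : bF a + bF b = bF (a (+) b).
Proof. by case: a; case: b; rewrite /bF /= ?addr0 ?add0r //; apply: val_inj. Qed.
Lemma bF_mul a b : bF a * bF b = bF (a && b).
Proof. by case: a; case: b; rewrite /bF /= ?mulr0 ?mul0r ?mulr1. Qed.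
Lemma bF_inj a b : bF a = bF b -> a = b.
Proof. by case: a; case: b => // /eqP; rewrite /bF /= ?oner_eq0 // eq_sym oner_eq0. Qed.
Lemma bF_eq a b : (bF a == bF b) = (a == b).
Proof. by apply/eqP/eqP => [/bF_inj|->]. Qed.
Lemma bF_ex (x : F) : exists a, x = bF a.
Proof. by case: (F2_cases x) => ->; [exists false|exists true]. Qed.
Definition B4 (a b c d : bool) : 'rV[F]_4 := \row_(j < 4) bF (nth false [:: a; b; c; d] j).
Definition B2 (a b : bool) : 'rV[F]_2 := \row_(j<2) bF (nth false [:: a; b] j).
Definition C4 (a b c d : bool) : 'cV[F]_4 := \col_(j < 4) bF (nth false [:: a; b; c; d] j).
Definition C2 (a b : bool) : 'cV[F]_2 := \col_(j<2) bF (nth false [:: a; b] j).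
Definition M (bp bq : bool) : 'M[F]_(4,2) := \matrix_(i<4, j<2)
  bF (nth false (nth [::] [:: [:: true; false]; [:: false; true]; [:: ~~bp; false]; [:: ~~bq; false]] i) j).
Lemma B4C4 a b c d s t u v : (B4 a b c d *m C4 s t u v) 0 0 = bF ((a&&s) (+) (b&&t) (+) (c&&u) (+) (d&&v)).
Proof. by rewrite !mxE !big_ord_recl big_ord0 /= !mxE /= !bF_mul addr0 !bF_add /= ?addbA. Qed.
Lemma B2C2 a b s t : (B2 a b *m C2 s t) 0 0 = bF ((a&&s) (+) (b&&t)).
Proof. by rewrite !mxE !big_ord_recl big_ord0 /= !mxE /= !bF_mul addr0 !bF_add /= ?addbA. Qed.
Lemma B4M a b c d bp bq : B4 a b c d *m M bp bq = B2 (a (+) (~~bp && c) (+) (~~bq && d)) b.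
Proof.
apply/rowP => j; rewrite !mxE !big_ord_recl big_ord0 /= !mxE /=.
case: j => [[|[|//]] ?] /=; rewrite !bF_mul addr0 ?bF_add /=; congr bF; 
  by case: a; case: b; case: c; case: d; case: bp; case: bq.
Qed.
Lemma bF_nz (x : F) : x = bF (x != 0).
Proof. by case: (F2_cases x) => ->; rewrite ?eqxx // oner_eq0. Qed.
Lemma B4_ex (x : 'rV[F]_4) : exists a b c d, x = B4 a b c d.
Proof.
exists (x 0 (inord 0) != 0), (x 0 (inord 1) != 0), (x 0 (inord 2) != 0), (x 0 (inord 3) != 0).
apply/rowP => j; rewrite mxE [LHS]bF_nz.
case: j => [[|[|[|[|//]]]] H] /=; do 3 f_equal; congr (x 0 _); apply: val_inj; by rewrite /= inordK.
Qed.

Definition nb (l : letter) := if l is Lb then false else true.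
Definition na (l : letter) := if l is La then false else true.
Lemma vecOfE l : vecOf l = B2 (nb l) (na l).
Proof. by case: l; apply/rowP => j; rewrite !mxE; case: j => [[|[|//]] ?]. Qed.

Definition th n (t : 'cV[F]_n) (x : 'rV[F]_n) : F := (x *m t) 0 0.

Lemma th_sum (T : finType) n (t : 'cV[F]_n) (L : T -> 'rV[F]_n) (s : {set T}) (c : T -> F) :
  th t (\sum_(v in s) c v *: L v) = \sum_(v in s) c v * th t (L v).
Proof.
rewrite /th mulmx_suml summxE; apply: eq_bigr => v _.
by rewrite -scalemxAl mxE.
Qed.

Lemma th_kill (T : finType) n (t : 'cV[F]_n) (L : T -> 'rV[F]_n) (s : {set T}) (c : T -> F) u :
  \sum_(v in s) c v *: L v = 0 -> u \in s -> th t (L u) = 1 ->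
  (forall v, v \in s -> v != u -> c v = 0 \/ th t (L v) = 0) -> c u = 0.
Proof.
move=> H0 us tu Hv.
have := congr1 (th t) H0; rewrite th_sum (bigD1 u) //= big1 ?addr0.
  by rewrite tu mulr1 /th mul0mx mxE.
move=> v /andP[vs vu]; by case: (Hv v vs vu) => ->; rewrite ?mul0r ?mulr0.
Qed.

Lemma free_coef (T : finType) (vT : vectType F) (L : T -> vT) (s : {set T}) (x0 : T) :
  (forall c : T -> F, \sum_(v in s) c v *: L v = 0 -> forall v, v \in s -> c v = 0) ->
  free [seq L v | v in s].
Proof.
move=> H; set X := [seq L v | v in s].
apply/(@freeP _ _ _ (in_tuple X)) => k Hk i.
pose k' (n : nat) := oapp k 0 (insub n : option 'I_(size X)).
pose c (v : T) := k' (index v (enum s)).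
have k'i : k i = k' i by rewrite /k' valK.
have sX : size X = size (enum s) by rewrite size_map.
have Hc : \sum_(v in s) c v *: L v = 0.
  rewrite -big_enum (big_nth x0); apply: etrans Hk; symmetry.
  rewrite (eq_bigr (fun j : 'I_(size X) => k' j *: X`_j)); last by move=> j _; rewrite /k' valK.
  rewrite -(big_mkord xpredT (fun j => k' j *: X`_j)) sX.
  apply: eq_big_nat => j /andP[_ hj].
  by rewrite /c index_uniq ?enum_uniq // (nth_map x0).
have hi : (i < size (enum s))%N by rewrite -sX.
rewrite k'i -[X in k' X](@index_uniq _ x0 i (enum s)) ?enum_uniq //.
apply: (H c Hc); by rewrite -mem_enum mem_nth.
Qed.

Lemma B2_0 : B2 false false = 0.
Proof. by apply/rowP => j; rewrite !mxE; case: j => [[|[|//]] ?]. Qed.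

Lemma B2_eq0 a b : B2 a b = 0 -> a = false /\ b = false.
Proof.
move=> h; have h0 := congr1 (fun x : 'rV[F]_2 => x 0 0) h.
have h1 := congr1 (fun x : 'rV[F]_2 => x 0 1) h.
move: h0 h1; rewrite /= !mxE /= -[0 : F]/(bF false) => /bF_inj -> /bF_inj -> //.
Qed.

Lemma B4Z a b c d e : bF e *: B4 a b c d = B4 (e && a) (e && b) (e && c) (e && d).
Proof. by apply/rowP => j; rewrite !mxE bF_mul; case: j => [[|[|[|[|//]]]] ?]. Qed.

Lemma B4D a b c d a' b' c' d' :
  B4 a b c d + B4 a' b' c' d' = B4 (a (+) a') (b (+) b') (c (+) c') (d (+) d').
Proof. by apply/rowP => j; rewrite !mxE bF_add; case: j => [[|[|[|[|//]]]] ?]. Qed.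

Lemma psi_ex l0 l1 : exists t0 t1, (vecOf l0 *m C2 t0 t1) 0 0 = 1 /\
  (l0 <> l1 -> (vecOf l1 *m C2 t0 t1) 0 0 = 0).
Proof.
case: l0; case: l1;
  first [ exists true, true; rewrite !vecOfE !B2C2; by split
        | exists true, false; rewrite !vecOfE !B2C2; by split
        | exists false, true; rewrite !vecOfE !B2C2; by split ].
Qed.

Section Main.
Variables (m : nat) (lam1 : 'I_m -> letter) (p q : 'I_m) (phi psi : 'I_m -> bool).
Hypotheses (hlam1 : Pm_char lam1) (hpq : p != q) (hp : lam1 p = La) (hq : lam1 q = La)
  (hphi : piece_choice lam1 phi) (hpsi : piece_choice lam1 psi).

Definition Lam (w : wV p q) : 'rV[F]_4 :=
  let x := sval w in
  if x.1 == p then B4 (~~ x.2) false true false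
  else if x.1 == q then B4 (~~ x.2) false false true
  else let l := lam1 x.1 in B4 (nb l) (na l) (phi x.1 && na l) (psi x.1 && na l).

Definition lamJ (bp bq : bool) (v : 'I_m) : letter :=
  if (~~ bp && phi v) (+) (~~ bq && psi v) then inv_letter (lam1 v) else lam1 v.

Lemma lamJ_char bp bq : Pm_char (lamJ bp bq).
Proof.
move=> i; rewrite /lamJ; have H1 := @hphi i; have H2 := @hpsi i; have H3 := @hlam1 i.
case: (lam1 i) H1 H2 H3; case: (lam1 (ordS i)) => H1 H2 H3 //=;
  try (rewrite H1 // H2 //);
  by case: (phi i); case: (phi (ordS i)); case: (psi i); case: (psi (ordS i)); case: bp; case: bq.
Qed.

Lemma lamJ_p bp bq : lamJ bp bq p = La.
Proof. by rewrite /lamJ hp; case: ifP. Qed.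
Lemma lamJ_q bp bq : lamJ bp bq q = La.
Proof. by rewrite /lamJ hq; case: ifP. Qed.

Lemma adj_neq bp bq x y : y = ordS x \/ x = ordS y -> lamJ bp bq x <> lamJ bp bq y.
Proof. by case=> ->; [|move/esym]; apply: lamJ_char. Qed.

Lemma mnf_ex (N : {set 'I_m}) : ~~ Pm_face N -> exists2 N' : {set 'I_m}, N' \subset N & Pm_mnf N'.
Proof.
move=> H; have [N' mN sub] := minset_exists (P := fun A : {set 'I_m} => ~~ Pm_face A) H.
have /minsetP [HN' Hmin] := mN.
exists N' => //; rewrite /Pm_mnf HN' /=; apply/forallP => x; apply/implyP => xN.
apply: contraT => nf; have := Hmin _ nf (subD1set N' x) => eq.
by move: xN; rewrite -eq !inE eqxx.
Qed.

Lemma face_sub (s : {set wV p q}) (N : {set 'I_m}) : wed_face s ->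
  (forall w : wV p q, (sval w).1 \in N -> w \in s) -> Pm_face N.
Proof.
move=> hs hN; apply: contraT => nf; have [N' sub mnf] := mnf_ex nf.
move/negP: hs => hs; exfalso; apply: hs; apply/existsP; exists N'; rewrite mnf /=.
apply/subsetP => w; rewrite inE => hw; apply: hN; exact: (subsetP sub).
Qed.

Lemma face2 (x y : 'I_m) : x != y -> Pm_face [set x; y] -> y = ordS x \/ x = ordS y.
Proof.
move=> xy; rewrite /Pm_face cards2 xy /= => /existsP [i /eqP E].
have : x \in [set i; ordS i] by rewrite -E !inE eqxx.
rewrite !inE => /orP [] /eqP hx.
  have : y \in [set i; ordS i] by rewrite -E !inE eqxx orbT.
  rewrite !inE => /orP [] /eqP hy; subst x y; [by rewrite eqxx in xy | by left].
have : y \in [set i; ordS i] by rewrite -E !inE eqxx orbT.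
rewrite !inE => /orP [] /eqP hy; subst x y; [by right | by rewrite eqxx in xy].
Qed.

Lemma face3 (x y z : 'I_m) : x != y -> x != z -> y != z -> ~~ Pm_face [set x; y; z].
Proof.
move=> xy xz yz.
have c3 : #|[set x; y; z]| = 3.
  by rewrite -setUA cardsU1 cards2 yz !inE negb_or xy xz.
rewrite /Pm_face c3 /=; apply/negP => /existsP [i /eqP E].
have := cards2 i (ordS i); rewrite -E c3; by case: (i != ordS i).
Qed.

Lemma wV_p (w : wV p q) : (sval w).1 = p -> w = vp p q (sval w).2.
Proof. by case: w => [[a b] pr] /= ea; apply: val_inj => /=; rewrite ea. Qed.
Lemma wV_q (w : wV p q) : (sval w).1 = q -> w = vq p q (sval w).2.
Proof. by case: w => [[a b] pr] /= ea; apply: val_inj => /=; rewrite ea. Qed.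
Lemma wV_gen (w : wV p q) : (sval w).1 != p -> (sval w).1 != q -> (sval w).2 = false.
Proof. by case: w => [[a b] /= pr] h1 h2; move: pr; rewrite (negbTE h1) (negbTE h2); case: b. Qed.
Lemma wV_eq (w w' : wV p q) : (sval w).1 = (sval w').1 -> (sval w).1 != p -> (sval w).1 != q -> w = w'.
Proof.
move=> e h1 h2; apply: val_inj; rewrite [LHS]surjective_pairing [RHS]surjective_pairing e.
by rewrite wV_gen // wV_gen // -e.
Qed.

Lemma qp : (q == p) = false.
Proof. by apply/negbTE; rewrite eq_sym. Qed.

Lemma Lam_vp b : Lam (vp p q b) = B4 (~~ b) false true false.
Proof. by rewrite /Lam /= eqxx. Qed.
Lemma Lam_vq b : Lam (vq p q b) = B4 (~~ b) false false true.
Proof. by rewrite /Lam /= qp eqxx. Qed.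

Lemma LamM_gen bp bq (w : wV p q) : (sval w).1 != p -> (sval w).1 != q ->
  Lam w *m M bp bq = vecOf (lamJ bp bq (sval w).1).
Proof.
move=> h1 h2; rewrite /Lam /= (negbTE h1) (negbTE h2) B4M vecOfE /lamJ.
by case: (lam1 _); case: (phi _); case: (psi _); case: bp; case: bq.
Qed.

Lemma both_p (s : {set wV p q}) y : y \in s -> (sval y).1 = p ->
  y != vp p q (vp p q true \in s) -> (vp p q true \in s) /\ (vp p q false \in s).
Proof.
move=> ys ey; rewrite (wV_p ey) in ys *; case E: (vp p q true \in s) => ne.
  split => //; case: (sval y).2 ys ne => //; by rewrite eqxx.
case: (sval y).2 ys ne => //; first by rewrite E. by rewrite eqxx.
Qed.
Lemma both_q (s : {set wV p q}) y : y \in s -> (sval y).1 = q ->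
  y != vq p q (vq p q true \in s) -> (vq p q true \in s) /\ (vq p q false \in s).
Proof.
move=> ys ey; rewrite (wV_q ey) in ys *; case E: (vq p q true \in s) => ne.
  split => //; case: (sval y).2 ys ne => //; by rewrite eqxx.
case: (sval y).2 ys ne => //; first by rewrite E. by rewrite eqxx.
Qed.


Section Key.
Variable (s : {set wV p q}).
Hypothesis hs : wed_face s.
Let bp := vp p q true \in s.
Let bq := vq p q true \in s.
Let x1 := vp p q bp.
Let x2 := vq p q bq.
Let inY v := [&& v \in s, v != x1 & v != x2].

Lemma allcopies y (w : wV p q) : inY y -> (sval w).1 = (sval y).1 -> w \in s.
Proof.
case/and3P => ys y1 y2 ew.
case: (eqVneq (sval y).1 p) => ep.
  have [h1 h2] := both_p ys ep y1.
  by rewrite (wV_p (etrans ew ep)); case: (sval w).2.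
case: (eqVneq (sval y).1 q) => eq.
  have [h1 h2] := both_q ys eq y2.
  by rewrite (wV_q (etrans ew eq)); case: (sval w).2.
by rewrite (wV_eq ew) // ew.
Qed.

Lemma inY_inj u v : inY u -> inY v -> (sval u).1 = (sval v).1 -> u = v.
Proof.
move=> hu hv e; case/and3P: (hu) => us u1 u2; case/and3P: (hv) => vs v1 v2.
case: (eqVneq (sval u).1 p) => ep.
  have [h1 _] := both_p us ep u1.
  move: u1 v1; rewrite /x1 /bp h1 (wV_p ep) (wV_p (etrans (esym e) ep)).
  by case: (sval u).2; case: (sval v).2; rewrite ?eqxx.
case: (eqVneq (sval u).1 q) => eq.
  have [h1 _] := both_q us eq u2.
  move: u2 v2; rewrite /x2 /bq h1 (wV_q eq) (wV_q (etrans (esym e) eq)).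
  by case: (sval u).2; case: (sval v).2; rewrite ?eqxx.
exact: wV_eq.
Qed.

Lemma Y1 v : inY v -> Lam v *m M bp bq = vecOf (lamJ bp bq (sval v).1).
Proof.
move=> hv; case/and3P: (hv) => vs v1 v2.
case: (eqVneq (sval v).1 p) => ep.
  have [h1 _] := both_p vs ep v1.
  move: v1; rewrite ep lamJ_p /x1 /bp h1 (wV_p ep).
  case: (sval v).2; rewrite ?eqxx // => _.
  by rewrite Lam_vp B4M vecOfE /= andbF.
case: (eqVneq (sval v).1 q) => eq.
  have [h1 _] := both_q vs eq v2.
  move: v2; rewrite eq lamJ_q /x2 /bq h1 (wV_q eq).
  case: (sval v).2; rewrite ?eqxx // => _.
  by rewrite Lam_vq B4M vecOfE /= andbF.
exact: LamM_gen.
Qed.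

Lemma Y2 v w : inY v -> inY w -> v != w -> lamJ bp bq (sval v).1 <> lamJ bp bq (sval w).1.
Proof.
move=> hv hw vw; have ne : (sval v).1 != (sval w).1.
  by apply/eqP => e; move/eqP: vw; apply; apply: inY_inj.
apply: adj_neq; apply: face2 => //; apply: (face_sub hs) => x; rewrite !inE.
by case/orP => /eqP e; [apply: (allcopies hv) | apply: (allcopies hw)].
Qed.

Lemma Y3 u v w : inY u -> inY v -> inY w -> u != v -> u != w -> v != w -> False.
Proof.
move=> hu hv hw uv uw vw.
have ne : forall a b, inY a -> inY b -> a != b -> (sval a).1 != (sval b).1.
  by move=> a b ha hb ab; apply/eqP => e; move/eqP: ab; apply; apply: inY_inj.
have := face3 (ne _ _ hu hv uv) (ne _ _ hu hw uw) (ne _ _ hv hw vw).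
move/negP; apply; apply: (face_sub hs) => x; rewrite !inE.
case/orP => [/orP [] | ] /eqP e;
  [apply: (allcopies hu) | apply: (allcopies hv) | apply: (allcopies hw)] => //.
Qed.

Lemma LamM_x1 : Lam x1 *m M bp bq = 0.
Proof. by rewrite /x1 Lam_vp B4M; case: bp; case: bq; rewrite /= B2_0. Qed.
Lemma LamM_x2 : Lam x2 *m M bp bq = 0.
Proof. by rewrite /x2 Lam_vq B4M; case: bp; case: bq; rewrite /= B2_0. Qed.

Lemma key (c : wV p q -> F) : \sum_(v in s) c v *: Lam v = 0 -> forall v, v \in s -> c v = 0.
Proof.
move=> H0.
have stepA : forall u, inY u -> c u = 0.
  move=> u hu; have us : u \in s by case/and3P: hu.
  case: (pickP (fun w => inY w && (w != u))) => [w0 /andP [hw0 ne] | none].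
    have [t0 [t1 [ht1 ht0]]] := psi_ex (lamJ bp bq (sval u).1) (lamJ bp bq (sval w0).1).
    apply: (th_kill (t := M bp bq *m C2 t0 t1) H0 us).
      by rewrite /th mulmxA Y1.
    move=> v vs vu; right; rewrite /th mulmxA.
    case: (eqVneq v x1) => [-> | v1]; first by rewrite LamM_x1 mul0mx mxE.
    case: (eqVneq v x2) => [-> | v2]; first by rewrite LamM_x2 mul0mx mxE.
    have hv : inY v by rewrite /inY vs v1 v2.
    rewrite Y1 //; case: (eqVneq v w0) => [-> | vw].
      by apply: ht0 => e; apply: (Y2 hu hw0); rewrite // eq_sym.
    by exfalso; apply: (Y3 hu hv hw0); rewrite // eq_sym.
  have [t0 [t1 [ht1 _]]] := psi_ex (lamJ bp bq (sval u).1) (lamJ bp bq (sval u).1).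
  apply: (th_kill (t := M bp bq *m C2 t0 t1) H0 us).
    by rewrite /th mulmxA Y1.
  move=> v vs vu; right; rewrite /th mulmxA.
  case: (eqVneq v x1) => [-> | v1]; first by rewrite LamM_x1 mul0mx mxE.
  case: (eqVneq v x2) => [-> | v2]; first by rewrite LamM_x2 mul0mx mxE.
  have hv : inY v by rewrite /inY vs v1 v2.
  by move: (none v); rewrite hv vu.
have x12 : x1 != x2.
  by apply/eqP => /(congr1 (fun w : wV p q => (sval w).1)) /= /eqP; rewrite (negbTE hpq).
have stepB : x1 \in s -> c x1 = 0.
  move=> x1s; apply: (th_kill (t := C4 false false true false) H0 x1s).
    by rewrite /th /x1 Lam_vp B4C4 /= ?andbF ?addbF /= ?bF1 ?bF0.
  move=> v vs vx.
  case: (eqVneq v x2) => [-> | v2].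
    by right; rewrite /th /x2 Lam_vq B4C4 /= ?andbF ?addbF /= ?bF1 ?bF0.
  by left; apply: stepA; rewrite /inY vs vx v2.
have stepC : x2 \in s -> c x2 = 0.
  move=> x2s; apply: (th_kill (t := C4 false false false true) H0 x2s).
    by rewrite /th /x2 Lam_vq B4C4 /= ?andbF ?addbF /= ?bF1 ?bF0.
  move=> v vs vx.
  case: (eqVneq v x1) => [-> | v1].
    by right; rewrite /th /x1 Lam_vp B4C4 /= ?andbF ?addbF /= ?bF1 ?bF0.
  by left; apply: stepA; rewrite /inY vs vx v1.
move=> v vs.
case: (eqVneq v x1) vs => [-> | v1] vs; first by apply: stepB.
case: (eqVneq v x2) vs => [-> | v2] vs; first by apply: stepC.
by apply: stepA; rewrite /inY vs v1 v2.
Qed.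
End Key.


Lemma proj_gen bp bq (lam : 'I_m -> letter) : (forall v, lam v = lamJ bp bq v) ->
  proj_DJ Lam [set vp p q bp; vq p q bq] lam.
Proof.
move=> hlam; exists (linfun (mulmxr (M bp bq))); split.
  clear hlam; apply/eqP; rewrite eqEsubv; apply/andP; split.
    apply/subvP => x; rewrite memv_ker lfunE /=.
    have [a [b [c [d ->]]]] := B4_ex x; rewrite B4M => /eqP /B2_eq0 [ha hb].
    have -> : B4 a b c d = bF c *: Lam (vp p q bp) + bF d *: Lam (vq p q bq).
      rewrite Lam_vp Lam_vq !B4Z B4D hb; congr B4; move: ha;
        by case: a; case: c; case: d; case: bp; case: bq.
    apply: memvD; apply: memvZ; apply: memv_span; apply: image_f; by rewrite !inE eqxx ?orbT.
  apply/span_subvP => y /imageP [v]; rewrite !inE => /orP [] /eqP -> ->;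
    rewrite memv_ker lfunE /= ?Lam_vp ?Lam_vq B4M; case: bp; case: bq; by rewrite /= B2_0.
move=> w /andP [wns _]; rewrite lfunE /= /wident hlam; clear hlam.
case: (eqVneq (sval w).1 p) => ep.
  move: wns; rewrite ep lamJ_p (wV_p ep) Lam_vp B4M vecOfE !inE.
  case: (sval w).2; case: bp; rewrite ?eqxx //= => _; by rewrite andbF.
case: (eqVneq (sval w).1 q) => eq.
  move: wns; rewrite eq lamJ_q (wV_q eq) Lam_vq B4M vecOfE !inE.
  case: (sval w).2; case: bq; rewrite ?eqxx ?orbT //= => _; by rewrite andbF.
exact: LamM_gen.
Qed.

Lemma main_sec :
  let lam2 := apply_choice lam1 phi in
  let lam3 := apply_choice lam1 psi in
  let lam4 := apply_choice lam2 psi in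
  exists Lam : wV p q -> 'rV['F_2]_4,
    wed_char Lam /\
    proj_DJ Lam [set vp p q true; vq p q true] lam1 /\
    proj_DJ Lam [set vp p q false; vq p q true] lam2 /\
    proj_DJ Lam [set vp p q true; vq p q false] lam3 /\
    proj_DJ Lam [set vp p q false; vq p q false] lam4.
Proof.
move=> lam2 lam3 lam4; exists Lam; split.
  move=> s hs; apply: (free_coef (vp p q true)); exact: key.
split; first by apply: proj_gen => v; rewrite /lamJ.
split; first by apply: proj_gen => v; rewrite /lamJ /lam2 /apply_choice addbF.
split; first by apply: proj_gen => v; rewrite /lamJ /lam3 /apply_choice.
apply: proj_gen => v; rewrite /lamJ /lam4 /lam2 /apply_choice /=.
by case: (phi v); case: (psi v); case: (lam1 v).
Qed.

End Main.

Theorem mainTheorem4 (m : nat) (hm : (3 <= m)%N) (lam1 : 'I_m -> letter)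
  (hlam1 : Pm_char lam1) (p q : 'I_m) (hpq : p != q)
  (hp : lam1 p = La) (hq : lam1 q = La)
  (phi psi : 'I_m -> bool)
  (hphi : piece_choice lam1 phi) (hpsi : piece_choice lam1 psi) :
  let lam2 := apply_choice lam1 phi in
  let lam3 := apply_choice lam1 psi in
  let lam4 := apply_choice lam2 psi in
  exists Lam : wV p q -> 'rV['F_2]_4,
    wed_char Lam /\
    proj_DJ Lam [set vp p q true; vq p q true] lam1 /\
    proj_DJ Lam [set vp p q false; vq p q true] lam2 /\
    proj_DJ Lam [set vp p q true; vq p q false] lam3 /\
    proj_DJ Lam [set vp p q false; vq p q false] lam4.
Proof. exact: (main_sec hlam1 hpq hp hq hphi hpsi). Qed.
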